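(* The relation $\{(\rho,\pi):\rho\text{ is total},\ \pi\text{ is trivial},\ |\rho|=|\pi|\}$ is $\Pi_3$-definable in $\mathbf Y^*=\langle\mathcal P,\le,[1]+[1]\rangle$.
   Context: $\mathcal P$ is the set of all integer partitions, including the empty partition $\emptyset$; a partition is a nonincreasing finite sequence of positive integers (its parts), and $|\pi|$ is the sum of its parts. A partition is total if it has exactly one part, and trivial if all its parts equal $1$; $\emptyset$ counts as both. Young's lattice $\mathbf Y=\langle\mathcal P,\le\rangle$ has $(s_1,\dots,s_r)\le(n_1,\dots,n_t)$ iff $r\le t$ and $s_i\le n_i$ for all $i\le r$; $\mathbf Y^*$ is $\mathbf Y$ with a constant symbol for the partition $(1,1)$. A relation is $\Pi_n$-definable if it is defined by a first-order formula in the language $\{\le,(1,1)\}$ in prenex form with $n$ alternating quantifier blocks, the outermost universal, and a quantifier-free matrix. *)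

(* Defs.v *)
From mathcomp Require Import all_boot.
Set Implicit Arguments. Unset Strict Implicit. Unset Printing Implicit Defensive.

Definition is_partition (s : seq nat) : bool :=
  sorted geq s && all (fun x => 0 < x) s.

Definition partition := {s : seq nat | is_partition s}.

Definition parts (p : partition) : seq nat := proj1_sig p.

Definition weight (p : partition) : nat := sumn (parts p).

Definition is_total (p : partition) : Prop :=
  size (parts p) <= 1.

Definition is_trivial (p : partition) : Prop :=
  all (fun x => x == 1) (parts p).

Definition yle (p q : partition) : Prop :=
  size (parts p) <= size (parts q) /\
  forall i, i < size (parts p) -> nth 0 (parts p) i <= nth 0 (parts q) i.

Lemma is_partition_11 : is_partition [:: 1; 1].
Proof. by []. Qed.
Definition p11 : partition := exist _ [:: 1; 1] is_partition_11.

Inductive term : Type :=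
| TVar : nat -> term
| TC : term.

Inductive qf : Type :=
| QLe : term -> term -> qf
| QEq : term -> term -> qf
| QNot : qf -> qf
| QAnd : qf -> qf -> qf
| QOr : qf -> qf -> qf.

Definition assign := nat -> partition.

Definition upd (e : assign) (x : nat) (p : partition) : assign :=
  fun j => if j == x then p else e j.

Definition teval (e : assign) (t : term) : partition :=
  match t with TVar i => e i | TC => p11 end.

Fixpoint qf_sat (e : assign) (f : qf) : Prop :=
  match f with
  | QLe s t => yle (teval e s) (teval e t)
  | QEq s t => teval e s = teval e t
  | QNot g => ~ qf_sat e g
  | QAnd g h => qf_sat e g /\ qf_sat e h
  | QOr g h => qf_sat e g \/ qf_sat e h
  end.

Fixpoint sat_block (univ : bool) (bl : seq nat) (k : assign -> Prop)
    (e : assign) : Prop :=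
  match bl with
  | [::] => k e
  | x :: xs =>
      if univ then forall p : partition, sat_block univ xs k (upd e x p)
      else exists p : partition, sat_block univ xs k (upd e x p)
  end.

Fixpoint sat_prenex (univ : bool) (bs : seq (seq nat)) (m : qf)
    (e : assign) : Prop :=
  match bs with
  | [::] => qf_sat e m
  | bl :: rest => sat_block univ bl (sat_prenex (~~ univ) rest m) e
  end.

Definition Pi_definable2 (n : nat) (R : partition -> partition -> Prop) : Prop :=
  exists (bs : seq (seq nat)) (m : qf),
    size bs = n /\
    forall e : assign, sat_prenex true bs m e <-> R (e 0) (e 1).

(* Main.v *)
Require Import Defs.
From mathcomp Require Import all_boot zify.
From Stdlib Require Import Classical.
Local Notation partition := Defs.partition.

Notation f p := (nth 0 (parts p)).

Lemma part_ok (p : partition) : is_partition (parts p).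
Proof. by case: p. Qed.

Lemma f_mono (p : partition) i j : i <= j -> f p j <= f p i.
Proof.
move=> ij; have /andP [S _] := part_ok p.
case: (ltnP j (size (parts p))) => hj.
  apply: (sorted_leq_nth (leT := geq)) => //; rewrite ?inE; try lia.
  - move=> a b c /= ; lia.
  - move=> a /=; lia.
by rewrite (nth_default _ hj).
Qed.

Lemma f_zero (p : partition) i : size (parts p) <= i -> f p i = 0.
Proof. exact: nth_default. Qed.

Lemma f_pos (p : partition) i : i < size (parts p) -> 0 < f p i.
Proof.
move=> hi; have /andP [_ /allP A] := part_ok p.
exact: (A _ (mem_nth 0 hi)).
Qed.

Lemma yle_iff p q : yle p q <-> forall i, f p i <= f q i.
Proof.
split.
  move=> [hs hi] i; case: (ltnP i (size (parts p))) => h; first exact: hi.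
  by rewrite f_zero.
move=> H; split; last by move=> i _; apply H.
case: (leqP (size (parts p)) (size (parts q))) => // h.
have := H (size (parts q)); rewrite (@f_zero q) //.
have := @f_pos p _ h; lia.
Qed.

Lemma p_ext (p q : partition) : (forall i, f p i = f q i) -> p = q.
Proof.
move=> H; apply: val_inj => /=.
have hs : size (parts p) = size (parts q).
  case: (ltngtP (size (parts p)) (size (parts q))) => // h.
  - have := @f_pos q _ h; rewrite -H f_zero //; lia.
  - have := @f_pos p _ h; rewrite H f_zero //; lia.
apply: (eq_from_nth (x0 := 0) hs) => i _; exact: H.
Qed.

Lemma yle_antisym p q : yle p q -> yle q p -> p = q.
Proof.
move=> /yle_iff h1 /yle_iff h2; apply: p_ext => i.
have := h1 i; have := h2 i; lia.
Qed.

Lemma neq_at p q i : f p i <> f q i -> p <> q.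
Proof. by move=> h e; apply: h; rewrite e. Qed.

Definition p0 : partition := exist _ [::] (erefl true).

Definition mono (g : nat -> nat) := forall i j, i <= j -> g j <= g i.

Definition mkS (g : nat -> nat) N := map g (iota 0 (find (fun i => g i == 0) (iota 0 N))).

Definition mkP g N : partition := odflt p0 (insub (mkS g N)).

Lemma mkS_part g N : mono g -> is_partition (mkS g N).
Proof.
move=> mg; rewrite /is_partition; apply/andP; split.
  apply/(sortedP 0) => i; rewrite size_map size_iota => hi.
  rewrite !(nth_map 0) ?size_iota; try lia.
  rewrite !nth_iota; try lia. apply: mg; lia.
apply/allP => x /mapP [i]; rewrite mem_iota => /andP [_ hi] ->.
have hN : find (fun i => g i == 0) (iota 0 N) <= N.
  by rewrite -[X in _ <= X](size_iota 0 N) find_size.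
have := before_find 0 (s := iota 0 N) (a := fun i => g i == 0) hi.
rewrite nth_iota /=; last lia.
by rewrite add0n lt0n => ->.
Qed.

Lemma mkP_parts g N : mono g -> parts (mkP g N) = mkS g N.
Proof. by move=> mg; rewrite /mkP insubT ?mkS_part. Qed.

Lemma mkP_f g N : mono g -> g N = 0 -> forall i, f (mkP g N) i = g i.
Proof.
move=> mg gN i; rewrite mkP_parts // /mkS.
set K := find _ _.
have hK : K <= N by rewrite /K -[X in _ <= X](size_iota 0 N) find_size.
case: (ltnP i K) => hi.
  by rewrite (nth_map 0) ?size_iota // nth_iota.
rewrite nth_default ?size_map ?size_iota //.
case: (ltnP K N) => hKN.
  have := nth_find 0 (s := iota 0 N) (a := fun i => g i == 0).
  rewrite has_find size_iota -/K => /(_ hKN).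
  rewrite nth_iota // add0n => /eqP gK.
  have := mg _ _ hi; lia.
have := mg N i; lia.
Qed.

Ltac cl := rewrite /=; repeat (let H := fresh in case: ifP => H; try (move/eqP: H => H; subst)); lia.

Definition rectF c r i := if i < r then c else 0.
Definition rect c r := mkP (rectF c r) r.
Lemma rect_f c r i : f (rect c r) i = rectF c r i.
Proof. apply: mkP_f; rewrite /rectF; last by rewrite ltnn. move=> a b h; cl. Qed.

Definition stairF k i := k - i.
Definition stair k := mkP (stairF k) k.
Lemma stair_f k i : f (stair k) i = k - i.
Proof. apply: mkP_f; rewrite /stairF; [move=> a b h|]; lia. Qed.

Lemma C_f i : f p11 i = rectF 1 2 i.
Proof. by case: i => [|[|i]] //=; rewrite nth_nil. Qed.

Lemma leC p : yle p11 p <-> 0 < f p 1.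
Proof.
rewrite yle_iff; split; first by move/(_ 1).
move=> h i; rewrite C_f /rectF; case: ifP => hi //.
have := @f_mono p i 1 ltac:(lia); lia.
Qed.

Lemma Cle p : yle p p11 <-> f p 0 <= 1 /\ f p 2 = 0.
Proof.
rewrite yle_iff; split.
  by move=> h; split; [have := h 0 | have := h 2]; rewrite C_f /rectF /=; lia.
move=> [h0 h2] i; rewrite C_f /rectF; case: ifP => hi.
  have := @f_mono p 0 i ltac:(lia); lia.
have := @f_mono p 2 i ltac:(lia); lia.
Qed.

Lemma total_iff p : is_total p <-> f p 1 = 0.
Proof.
rewrite /is_total; split => h.
  by rewrite f_zero.
case: leqP => // h2; have := @f_pos p 1 h2; lia.
Qed.

Lemma trivial_iff p : is_trivial p <-> f p 0 <= 1.
Proof.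
rewrite /is_trivial; split.
  case: (ltnP 0 (size (parts p))) => h.
    by move/allP/(_ _ (mem_nth 0 h))/eqP => ->.
  by rewrite f_zero.
move=> h; apply/allP => x /(nthP 0) [i hi <-].
have e : f p i = 1 by have := @f_pos p i hi; have := @f_mono p 0 i ltac:(lia); lia.
by rewrite e.
Qed.

Lemma total_shape p : is_total p -> forall i, f p i = rectF (f p 0) 1 i.
Proof.
move=> /total_iff h i; rewrite /rectF; case: i => [|i] //=.
have := @f_mono p 1 i.+1 ltac:(lia); lia.
Qed.

Lemma trivial_shape p : is_trivial p -> forall i, f p i = rectF 1 (size (parts p)) i.
Proof.
move=> /trivial_iff h i; rewrite /rectF; case: ltnP => hi.
  have := @f_pos p i hi; have := @f_mono p 0 i ltac:(lia); lia.
by rewrite f_zero.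
Qed.

Lemma weight_total p : is_total p -> weight p = f p 0.
Proof.
rewrite /is_total /weight; case: (parts p) => [|a [|b s]] //= _; lia.
Qed.

Lemma weight_trivial p : is_trivial p -> weight p = size (parts p).
Proof.
rewrite /is_trivial /weight => h.
have /all_pred1P -> : all (pred1 1) (parts p) by [].
by rewrite sumn_nseq size_nseq mul1n.
Qed.

Definition Le a b := QLe (TVar a) (TVar b).
Definition Eqq a b := QEq (TVar a) (TVar b).
Definition Imp p q := QOr (QNot p) q.
Definition Iff p q := QAnd (Imp p q) (Imp q p).
Definition Lt a b := QAnd (Le a b) (QNot (Eqq a b)).
Definition LeC a := QLe TC (TVar a).
Definition CLe a := QLe (TVar a) TC.

Definition RectQ a u v := QAnd (Lt u a) (Imp (Lt v a) (Le v u)).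
Definition CovQ a b w x y z :=
  QAnd (Lt a b)
   (QAnd (Imp (QAnd (QAnd (Le a x) (Le x b)) (QAnd (Le a y) (Le y b))) (QOr (Le x y) (Le y x)))
         (Imp (QAnd (Lt a z) (Lt z b))
              (QAnd (LeC b) (QAnd (Le w b) (QAnd (QNot (LeC w)) (QNot (CLe w))))))).
Definition MnegQ :=
  QAnd (RectQ 3 6 11) (QAnd (RectQ 4 7 12) (QAnd (RectQ 5 8 13)
   (QAnd (CovQ 3 4 9 14 15 16) (QAnd (CovQ 3 5 10 17 18 19) (QNot (Iff (Le 4 2) (Le 5 2))))))).
Definition MQ :=
  QAnd (QNot (LeC 0)) (QAnd (Imp (QAnd (Le 20 1) (QNot (LeC 20))) (CLe 20))
     (QOr MnegQ (Iff (Le 0 2) (Le 1 2)))).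
Definition BS : seq (seq nat) :=
  [:: [:: 2]; [:: 3; 4; 5; 6; 7; 8; 9; 10];
      [:: 11; 12; 13; 14; 15; 16; 17; 18; 19; 20]].

Definition ltP p q := yle p q /\ ~ p = q.
Definition impP (P Q : Prop) := ~ P \/ Q.
Definition iffP (P Q : Prop) := impP P Q /\ impP Q P.
Definition RectP A u v := ltP u A /\ impP (ltP v A) (yle v u).
Definition CovP A B w x y z :=
  ltP A B /\ (impP ((yle A x /\ yle x B) /\ (yle A y /\ yle y B)) (yle x y \/ yle y x) /\
   impP (ltP A z /\ ltP z B) (yle p11 B /\ (yle w B /\ (~ yle p11 w /\ ~ yle w p11)))).
Definition MnegP lam A B D uA uB uD w1 w2 vA vB vD x1 y1 z1 x2 y2 z2 :=
  RectP A uA vA /\ (RectP B uB vB /\ (RectP D uD vD /\ (CovP A B w1 x1 y1 z1 /\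
   (CovP A D w2 x2 y2 z2 /\ ~ iffP (yle B lam) (yle D lam))))).
Definition MP rho pi lam A B D uA uB uD w1 w2 vA vB vD x1 y1 z1 x2 y2 z2 t :=
  ~ yle p11 rho /\ (impP (yle t pi /\ ~ yle p11 t) (yle t p11) /\
   (MnegP lam A B D uA uB uD w1 w2 vA vB vD x1 y1 z1 x2 y2 z2 \/ iffP (yle rho lam) (yle pi lam))).
Definition SemP rho pi := forall lam, exists A B D uA uB uD w1 w2,
  forall vA vB vD x1 y1 z1 x2 y2 z2 t,
   MP rho pi lam A B D uA uB uD w1 w2 vA vB vD x1 y1 z1 x2 y2 z2 t.

Lemma sat_SemP e : sat_prenex true BS MQ e <-> SemP (e 0) (e 1).
Proof. reflexivity. Qed.

Definition isRect A c r := 0 < c /\ 0 < r /\ forall i, f A i = rectF c r i.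

Ltac pw := rewrite ?rect_f ?stair_f ?C_f;
  repeat (rewrite mkP_f; [|by rewrite /mono => ? ? ? /=; cl|by cl]); rewrite /rectF /=.

Definition remv A k := mkP (fun i => if i == k then (f A i).-1 else f A i) (size (parts A)).

Lemma remv_f A k : f A k.+1 < f A k ->
  forall i, f (remv A k) i = if i == k then (f A i).-1 else f A i.
Proof.
move=> hk; apply: mkP_f.
  move=> a b hab /=.
  have := @f_mono A a b hab.
  case: (ltnP k b) => hkb.
    have := @f_mono A k.+1 b hkb; cl.
  cl.
by rewrite f_zero //; case: ifP.
Qed.

Lemma descent A i : f A i < f A 0 -> exists j, j < i /\ f A j.+1 < f A j.
Proof.
elim: i => [|i IH] h; first lia.
case: (ltnP (f A i) (f A 0)) => h2.
  have [j [? ?]] := IH h2; exists j; split => //; lia.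
exists i; split => //.
have := @f_mono A 0 i ltac:(lia); lia.
Qed.

Lemma rect_decode A u : (forall v, RectP A u v) -> exists c r, isRect A c r.
Proof.
move=> H.
have [[uA uneq] _] := H u.
have Hv : forall v, ltP v A -> yle v u.
  move=> v hv; have [_ [//|//]] := H v.
set r := size (parts A).
have hr : 0 < r.
  rewrite lt0n; apply/negP => /eqP hr0; apply: uneq.
  apply: yle_antisym => //; apply/yle_iff => i.
  rewrite (@f_zero A) //; lia.
have hc : 0 < f A 0 by apply: f_pos.
have claim : forall i, i < r -> f A i = f A 0.
  move=> i hi; apply: NNPP => hne.
  have hlt : f A i < f A 0 by have := @f_mono A 0 i ltac:(lia); lia.
  have [j [hji hj]] := @descent A i hlt.
  have hlast : f A r < f A r.-1.
    rewrite (@f_zero A r) //; apply: f_pos; lia.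
  have hv1 : ltP (remv A j) A.
    split.
      apply/yle_iff => k; rewrite remv_f //; cl.
    apply: (@neq_at _ _ j); rewrite remv_f // eqxx; lia.
  have hv2 : ltP (remv A r.-1) A.
    have e : r.-1.+1 = r by lia.
    split.
      apply/yle_iff => k; rewrite remv_f ?e //; cl.
    apply: (@neq_at _ _ r.-1); rewrite remv_f ?e // eqxx; lia.
  apply: uneq; apply: yle_antisym => //; apply/yle_iff => k.
  have /yle_iff h1 := Hv _ hv1.
  have /yle_iff h2 := Hv _ hv2.
  have := h1 k; have := h2 k.
  have e : r.-1.+1 = r by lia.
  rewrite !remv_f ?e //; cl.
exists (f A 0), r; do 2 split => //.
move=> i; rewrite /rectF; case: ifP => hi; first exact: claim.
by rewrite f_zero //; lia.
Qed.

Lemma isRect_le A c r B c' r' : isRect A c r -> isRect B c' r' ->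
  (yle A B <-> c <= c' /\ r <= r').
Proof.
move=> [hc [hr hA]] [hc' [hr' hB]]; rewrite yle_iff; split.
  move=> h; have := h 0; have := h r.-1; rewrite !hA !hB /rectF; cl.
move=> [h1 h2] i; rewrite hA hB /rectF; cl.
Qed.

Lemma isRect_eq A c r B c' r' : isRect A c r -> isRect B c' r' ->
  c = c' -> r = r' -> A = B.
Proof.
move=> [hc [hr hA]] [hc' [hr' hB]] e1 e2; apply: p_ext => i.
by rewrite hA hB e1 e2.
Qed.

Lemma cov_decode A c r B c' r' w : isRect A c r -> isRect B c' r' ->
  (forall x y z, CovP A B w x y z) -> c' + r' = c + r + 1.
Proof.
move=> RA RB H.
have [[AB ABne] _] := H A A A.
have chain : forall x y, yle A x -> yle x B -> yle A y -> yle y B -> yle x y \/ yle y x.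
  move=> x y h1 h2 h3 h4; have [_ [[hn|hq] _]] := H x y A; [exfalso; apply: hn; tauto | exact hq].
have btw : forall z, ltP A z -> ltP z B ->
    yle p11 B /\ (yle w B /\ (~ yle p11 w /\ ~ yle w p11)).
  move=> z h1 h2; have [_ [_ [hn|hq]]] := H A A z; [exfalso; apply: hn; tauto | exact hq].
have [hc [hr hA]] := RA; have [hc' [hr' hB]] := RB.
have [le1 le2] := (@isRect_le _ _ _ _ _ _ RA RB).1 AB.
have nEq : ~ (c = c' /\ r = r') by move=> [e1 e2]; apply: ABne; exact: (@isRect_eq _ _ _ _ _ _ RA RB e1 e2).
have [case1|case1] := boolP ((c < c') && (r < r')).
  move/andP: case1 => [h1 h2]; exfalso.
  set x := mkP (fun i => if i == 0 then c.+1 else if i < r then c else 0) r.+1.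
  set y := mkP (fun i => if i < r then c else if i == r then 1 else 0) r.+1.
  have := chain x y; rewrite !yle_iff !/x !/y.
  case.
  - move=> i; pw; rewrite hA /rectF; cl.
  - move=> i; pw; rewrite hB /rectF; cl.
  - move=> i; pw; rewrite hA /rectF; cl.
  - move=> i; pw; rewrite hB /rectF; cl.
  - move/(_ 0); pw; cl.
  - move/(_ r); pw; cl.
have [case2|case2] := boolP (c.+2 <= c').
  have er : r' = r by lia.
  have [r2|r2] := boolP (2 <= r).
    exfalso.
    set x := mkP (fun i => if i == 0 then c.+2 else if i < r then c else 0) r.+1.
    set y := mkP (fun i => if i < 2 then c.+1 else if i < r then c else 0) r.+1.
    have := chain x y; rewrite !yle_iff !/x !/y.
    case.
    - move=> i; pw; rewrite hA /rectF; cl.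
    - move=> i; pw; rewrite hB /rectF; cl.
    - move=> i; pw; rewrite hA /rectF; cl.
    - move=> i; pw; rewrite hB /rectF; cl.
    - move/(_ 0); pw; cl.
    - move/(_ 1); pw; cl.
  exfalso.
  have h : yle p11 B.
    apply: (proj1 (btw (rect c.+1 1) _ _)).
  - split; first by apply/yle_iff => i; pw; rewrite hA /rectF; cl.
    apply: (@neq_at _ _ 0); pw; rewrite hA /rectF; cl.
  - split; first by apply/yle_iff => i; pw; rewrite hB /rectF; cl.
    apply: (@neq_at _ _ 0); pw; rewrite hB /rectF; cl.
  move/leC: h; rewrite hB /rectF; cl.
have [case3|case3] := boolP (r.+2 <= r').
  have ec : c' = c by lia.
  have [c2|c2] := boolP (2 <= c).
    exfalso.
    set x := mkP (fun i => if i < r then c else if i == r then 1 else if i == r.+1 then 1 else 0) r.+2.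
    set y := mkP (fun i => if i < r then c else if i == r then 2 else 0) r.+2.
    have := chain x y; rewrite !yle_iff !/x !/y.
    case.
    - move=> i; pw; rewrite hA /rectF; cl.
    - move=> i; pw; rewrite hB /rectF; cl.
    - move=> i; pw; rewrite hA /rectF; cl.
    - move=> i; pw; rewrite hB /rectF; cl.
    - move/(_ r.+1); pw; cl.
    - move/(_ r); pw; cl.
  exfalso.
  have [_ [h1 [h2 h3]]] : yle p11 B /\ (yle w B /\ (~ yle p11 w /\ ~ yle w p11)).
    apply: (btw (rect 1 r.+1)).
  - split; first by apply/yle_iff => i; pw; rewrite hA /rectF; cl.
    apply: (@neq_at _ _ r); pw; rewrite hA /rectF; cl.
  - split; first by apply/yle_iff => i; pw; rewrite hB /rectF; cl.
    apply: (@neq_at _ _ r.+1); pw; rewrite hB /rectF; cl.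
  move/leC: h2 => h2; move/Cle: h3 => h3.
  move/yle_iff/(_ 0): h1; rewrite hB /rectF.
  have := @f_mono w 1 2 ltac:(lia).
  case: ifP => ? ? ?; apply: h3; split; lia.
lia.
Qed.

Lemma stair_rect P c r k : isRect P c r -> (yle P (stair k) <-> c + r <= k.+1).
Proof.
move=> [hc [hr hP]]; rewrite yle_iff; split.
  move/(_ r.-1); rewrite hP stair_f /rectF; cl.
move=> h i; rewrite hP stair_f /rectF; cl.
Qed.

Lemma rect_isRect c r : 0 < c -> 0 < r -> isRect (rect c r) c r.
Proof. by move=> hc hr; do 2 split => //; exact: rect_f. Qed.

Definition two := rect 2 1.

Lemma nCtwo : ~ yle p11 two.
Proof. move/leC; rewrite /two rect_f /rectF; cl. Qed.
Lemma ntwoC : ~ yle two p11.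
Proof. move/Cle; rewrite /two !rect_f /rectF; cl. Qed.

Lemma rect_witness c r : 0 < c -> 0 < r ->
  forall v, RectP (rect c r)
    (mkP (fun i => if i < r.-1 then c else if i < r then c.-1 else 0) r) v.
Proof.
move=> hc hr v; split.
  split; first by apply/yle_iff => i; pw; cl.
  apply: (@neq_at _ _ r.-1); pw; cl.
case: (classic (ltP v (rect c r))) => h; [right | left] => //.
move: h => [/yle_iff h hne].
have hlast : f v r.-1 < c.
  apply: NNPP => hn; apply: hne; apply: p_ext => i; rewrite rect_f /rectF.
  have := h i; rewrite rect_f /rectF.
  case: ifP => hi hvi.
    have := @f_mono v i r.-1 ltac:(lia); lia.
  lia.
apply/yle_iff => i; pw.
have := h i; rewrite rect_f /rectF.
have := @f_mono v r.-1 i.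
cl.
Qed.

Lemma ex_gt x y : ~ yle x y -> exists i, f y i < f x i.
Proof.
move=> h; apply: NNPP => hn; apply: h; apply/yle_iff => i.
case: (leqP (f x i) (f y i)) => // hi; exfalso; apply: hn; by exists i.
Qed.

Lemma cov_col c r : 0 < c -> 0 < r ->
  forall x y z, CovP (rect c r) (rect c.+1 r) two x y z.
Proof.
move=> hc hr x y z; split.
  split; first by apply/yle_iff => i; pw; cl.
  apply: (@neq_at _ _ 0); pw; cl.
split.
  case: (classic ((yle (rect c r) x /\ yle x (rect c.+1 r)) /\
     (yle (rect c r) y /\ yle y (rect c.+1 r)))) => h; [right|by left].
  move: h => [[/yle_iff h1 /yle_iff h2] [/yle_iff h3 /yle_iff h4]].
  case: (classic (yle x y)) => hxy; [by left | right].
  have [i hi] := @ex_gt x y hxy.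
  apply/yle_iff => j.
  have := h1 i; have := h2 i; have := h3 i; have := h4 i.
  have := h1 j; have := h2 j; have := h3 j; have := h4 j.
  case: (leqP j i) => hji.
    have := @f_mono y j i hji; have := @f_mono x j i hji. rewrite !rect_f /rectF. cl.
  have := @f_mono y i j ltac:(lia); have := @f_mono x i j ltac:(lia). rewrite !rect_f /rectF. cl.
case: (classic (ltP (rect c r) z /\ ltP z (rect c.+1 r))) => h; [right|by left].
move: h => [[/yle_iff h1 hne1] [/yle_iff h2 hne2]].
have [r1|r1] := boolP (r == 1).
  move/eqP: r1 => r1; subst r; exfalso.
  case: (leqP (f z 0) c) => hz.
    apply: hne1; apply: p_ext => i; have := h1 i; have := h2 i; pw; case: i => [|i]; cl.
  apply: hne2; apply: p_ext => i; have := h1 i; have := h2 i; pw; case: i => [|i]; cl.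
split; first by apply/leC; pw; cl.
split; first by apply/yle_iff => i; rewrite /two; pw; cl.
exact: (conj nCtwo ntwoC).
Qed.

Lemma cov_row c r : 0 < c -> 0 < r ->
  forall x y z, CovP (rect c r) (rect c r.+1) two x y z.
Proof.
move=> hc hr x y z; split.
  split; first by apply/yle_iff => i; pw; cl.
  apply: (@neq_at _ _ r); pw; cl.
split.
  case: (classic ((yle (rect c r) x /\ yle x (rect c r.+1)) /\
     (yle (rect c r) y /\ yle y (rect c r.+1)))) => h; [right|by left].
  move: h => [[/yle_iff h1 /yle_iff h2] [/yle_iff h3 /yle_iff h4]].
  case: (leqP (f x r) (f y r)) => hr'; [left|right]; apply/yle_iff => j;
  have := h1 j; have := h2 j; have := h3 j; have := h4 j; rewrite !rect_f /rectF;
  case: (ltngtP j r) => hj; try (subst j); cl.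
case: (classic (ltP (rect c r) z /\ ltP z (rect c r.+1))) => h; [right|by left].
move: h => [[/yle_iff h1 hne1] [/yle_iff h2 hne2]].
have [c1|c1] := boolP (c == 1).
  move/eqP: c1 => c1; subst c; exfalso.
  case: (leqP (f z r) 0) => hz.
    apply: hne1; apply: p_ext => i; have := h1 i; have := h2 i; pw;
    case: (ltngtP i r) => hi; try (subst i); cl.
  apply: hne2; apply: p_ext => i; have := h1 i; have := h2 i; pw;
    case: (ltngtP i r) => hi; try (subst i); cl.
split; first by apply/leC; pw; cl.
split; first by apply/yle_iff => i; rewrite /two; pw; cl.
exact: (conj nCtwo ntwoC).
Qed.

Lemma iffP_iff (P Q : Prop) : iffP P Q <-> (P <-> Q).
Proof. rewrite /iffP /impP; case: (classic P); case: (classic Q); tauto. Qed.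

Lemma impP_imp (P Q : Prop) : impP P Q <-> (P -> Q).
Proof. rewrite /impP; case: (classic P); tauto. Qed.

Definition uw c r := mkP (fun i => if i < r.-1 then c else if i < r then c.-1 else 0) r.

Lemma Qstair rho pi : SemP rho pi -> forall k, (yle rho (stair k) <-> yle pi (stair k)).
Proof.
move=> H k; have [A [B [D [uA [uB [uD [w1 [w2 Hm]]]]]]]] := H (stair k).
apply/iffP_iff; apply: NNPP => hn.
have Mn : forall vA vB vD x1 y1 z1 x2 y2 z2,
    MnegP (stair k) A B D uA uB uD w1 w2 vA vB vD x1 y1 z1 x2 y2 z2.
  move=> vA vB vD x1 y1 z1 x2 y2 z2.
  by have [_ [_ [|]]] := Hm vA vB vD x1 y1 z1 x2 y2 z2 p0.
have [cA [rA RA]] : exists c r, isRect A c r.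
  apply: (@rect_decode A uA) => v; by have [] := Mn v p0 p0 p0 p0 p0 p0 p0 p0.
have [cB [rB RB]] : exists c r, isRect B c r.
  apply: (@rect_decode B uB) => v; by have [_ []] := Mn p0 v p0 p0 p0 p0 p0 p0 p0.
have [cD [rD RD]] : exists c r, isRect D c r.
  apply: (@rect_decode D uD) => v; by have [_ [_ []]] := Mn p0 p0 v p0 p0 p0 p0 p0 p0.
have e1 : cB + rB = cA + rA + 1.
  apply: (@cov_decode A cA rA B cB rB w1 RA RB) => x y z.
  by have [_ [_ [_ []]]] := Mn p0 p0 p0 x y z p0 p0 p0.
have e2 : cD + rD = cA + rA + 1.
  apply: (@cov_decode A cA rA D cD rD w2 RA RD) => x y z.
  by have [_ [_ [_ [_ []]]]] := Mn p0 p0 p0 p0 p0 p0 x y z.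
have [_ [_ [_ [_ [_ hh]]]]] := Mn p0 p0 p0 p0 p0 p0 p0 p0 p0.
apply: hh; apply/iffP_iff.
rewrite (@stair_rect B cB rB k RB) (@stair_rect D cD rD k RD) e1 e2 //.
Qed.

Lemma sem_to_R rho pi : SemP rho pi ->
  is_total rho /\ is_trivial pi /\ weight rho = weight pi.
Proof.
move=> H.
have [A [B [D [uA [uB [uD [w1 [w2 Hm]]]]]]]] := H rho.
have tot : is_total rho.
  have [h _] := Hm p0 p0 p0 p0 p0 p0 p0 p0 p0 p0.
  apply/total_iff; move/leC: h; lia.
have triv : is_trivial pi.
  apply/trivial_iff; apply: NNPP => hn.
  have [_ [h _]] := Hm p0 p0 p0 p0 p0 p0 p0 p0 p0 two.
  move/impP_imp: h => h; apply: ntwoC; apply: h; split; last exact: nCtwo.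
  apply/yle_iff => i; rewrite /two rect_f /rectF.
  case: i => [|i] /=; lia.
split => //; split => //.
rewrite weight_total // weight_trivial //.
have hr := @total_shape rho tot; have hp := @trivial_shape pi triv.
set n := f rho 0 in hr *; set m := size (parts pi) in hp *.
have Q1 := @Qstair rho pi H n; have Q2 := @Qstair rho pi H m.
have l1 : yle rho (stair n) by apply/yle_iff => i; rewrite hr stair_f /rectF; cl.
have l2 : yle pi (stair m) by apply/yle_iff => i; rewrite hp stair_f /rectF; cl.
move/Q1/yle_iff/(_ m.-1): l1; move/Q2/yle_iff/(_ 0): l2.
rewrite hr hp !stair_f /rectF; cl.
Qed.

Lemma R_to_sem rho pi : is_total rho -> is_trivial pi -> weight rho = weight pi -> SemP rho pi.
Proof.
move=> tot triv w lam.
have nC : ~ yle p11 rho by move/leC; move/total_iff: tot; lia.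
have tclause : forall t, impP (yle t pi /\ ~ yle p11 t) (yle t p11).
  move=> t; apply/impP_imp => [[/yle_iff h1 h2]].
  move/leC: h2 => h2; apply/Cle; have := h1 0; move/trivial_iff: triv.
  have := @f_mono t 1 2 ltac:(lia); lia.
case: (classic (iffP (yle rho lam) (yle pi lam))) => hQ.
  exists p0, p0, p0, p0, p0, p0, p0, p0 => *; split => //; split => //; by right.
have hr := @total_shape rho tot; have hp := @trivial_shape pi triv.
rewrite weight_total // weight_trivial // in w.
set n := f rho 0 in hr w; set m := size (parts pi) in hp w.
have Er : rho = rect n 1 by apply: p_ext => i; rewrite hr rect_f.
have Ep : pi = rect 1 n by apply: p_ext => i; rewrite hp rect_f w.
have hn : 0 < n.
  case: (posnP n) => // n0; exfalso; apply: hQ; apply/iffP_iff.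
  suff -> : rho = pi by [].
  by rewrite Er Ep n0; apply: p_ext => i; rewrite !rect_f /rectF; cl.
have [k [hk hstep]] : exists k, k.+1 < n /\
    ~ (yle (rect (n - k) k.+1) lam <-> yle (rect (n - k.+1) k.+2) lam).
  apply: NNPP => hne; apply: hQ; apply/iffP_iff.
  have all : forall k, k < n -> (yle (rect n 1) lam <-> yle (rect (n - k) k.+1) lam).
    elim => [|k IH] hk; first by rewrite subn0.
    rewrite IH; last lia.
    case: (classic (yle (rect (n - k) k.+1) lam <-> yle (rect (n - k.+1) k.+2) lam)) => // h.
    exfalso; apply: hne; exists k; split => //.
  have e1 : n - n.-1 = 1 by lia.
  have e2 : n.-1.+1 = n by lia.
  have := all n.-1 ltac:(lia); rewrite e1 e2 -Er -Ep //.
set c := n - k.+1.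
have hc : 0 < c by rewrite /c; lia.
have eB : n - k = c.+1 by rewrite /c; lia.
rewrite eB -/c in hstep.
exists (rect c k.+1), (rect c.+1 k.+1), (rect c k.+2),
  (uw c k.+1), (uw c.+1 k.+1), (uw c k.+2), two, two.
move=> vA vB vD x1 y1 z1 x2 y2 z2 t.
split => //; split; first exact: tclause.
left; split; first exact: rect_witness.
split; first exact: rect_witness.
split; first exact: rect_witness.
split; first exact: cov_col.
split; first exact: cov_row.
by move/iffP_iff.
Qed.

Theorem lemma3p9 :
  Pi_definable2 3
    (fun rho pi => is_total rho /\ is_trivial pi /\ weight rho = weight pi).
Proof.
exists BS, MQ; split => // e.
rewrite sat_SemP; split; first exact: sem_to_R.
move=> [h1 [h2 h3]]; exact: R_to_sem.
Qed.
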